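(* Let $n\ge2$, $f\in C(\mathbb{R}^{n+1},\mathbb{R}^n)$ be $\kappa$-Lipschitz and $\mathbb{Z}^{n+1}$-periodic in $(r,\tau)$, and let $v(\tau;c)$ solve $\dot v=f(v,\tau)$, $v(0)=c\in\mathbb{R}^n$. Assume there is $C_0>0$ with $v_i(\tau;c^2)-v_i(\tau;c^1)\le C_0$ for all $i$, $\tau>0$ and all $c^1,c^2\in\mathbb{R}^n$ with $c^1-c^2\in[0,1]^n$. Then for all $\sigma,l,t>0$, all $c\in\mathbb{R}^n$ and all $i\in\{1,\dots,n\}$, \[v_i((\sigma+l)t;(\sigma+l)c)\le v_i(\sigma t;\sigma c)+v_i(lt;lc)+2(\|f_i\|_\infty+C_0+1).\] *)

(* Defs.v *)
From Stdlib Require Import Reals ZArith.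
From mathcomp Require Import ssreflect ssrbool eqtype ssrnat fintype.
Open Scope R_scope.

Definition vec (n : nat) := 'I_n -> R.

Definition field (n : nat) := vec n -> R -> vec n.

Definition vscale {n} (a : R) (x : vec n) : vec n := fun j => a * x j.

Definition lipschitz {n} (kappa : R) (f : field n) : Prop :=
  forall (r r' : vec n) (tau tau' d : R),
    (forall j, Rabs (r j - r' j) <= d) -> Rabs (tau - tau') <= d ->
    forall i, Rabs (f r tau i - f r' tau' i) <= kappa * d.

Definition continuous_field {n} (f : field n) : Prop :=
  forall r tau i (eps : R), eps > 0 -> exists delta, delta > 0 /\
    forall r' tau', (forall j, Rabs (r j - r' j) < delta) ->
      Rabs (tau - tau') < delta -> Rabs (f r tau i - f r' tau' i) < eps.

Definition periodic_field {n} (f : field n) : Prop :=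
  forall (r : vec n) (tau : R) (z : 'I_n -> Z) (m : Z),
    f (fun j => r j + IZR (z j)) (tau + IZR m) = f r tau.

(* v c tau = v(tau; c) solves  v' = f(v, tau), v(0) = c  (on all of R) *)
Definition is_flow {n} (f : field n) (v : vec n -> R -> vec n) : Prop :=
  forall c : vec n, v c 0 = c /\
    forall (tau : R) (i : 'I_n),
      derivable_pt_lim (fun s => v c s i) tau (f (v c tau) tau i).

Definition is_supnorm_comp {n} (f : field n) (i : 'I_n) (M : R) : Prop :=
  is_lub (fun y => exists r tau, y = Rabs (f r tau i)) M.

(* Main.v *)
Require Import Defs.
From Stdlib Require Import Reals ZArith Lra Lia.
From mathcomp Require Import ssreflect ssrbool eqtype ssrnat fintype seq.
Open Scope R_scope.

Section L.
Variable n : nat.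

Definition ssq (d : 'I_n -> R) (L : seq 'I_n) :=
  foldr (fun j acc => d j * d j + acc) 0 L.

Lemma ssq_ge0 d L : 0 <= ssq d L.
Proof. elim: L => [|j L IH] /=; [lra|]. have := Rle_0_sqr (d j). rewrite /Rsqr. lra. Qed.

Lemma ssq_le d L j : j \in L -> d j * d j <= ssq d L.
Proof.
elim: L => [|k L IH] //= ; rewrite in_cons => /orP [/eqP -> | H].
- have := ssq_ge0 d L. rewrite /ssq. lra.
- have := IH H. have := Rle_0_sqr (d k). rewrite /ssq /Rsqr. lra.
Qed.

Lemma ssq_deriv (x y x' y' : R -> 'I_n -> R) t L :
  (forall j, derivable_pt_lim (fun s => x s j) t (x' t j)) ->
  (forall j, derivable_pt_lim (fun s => y s j) t (y' t j)) ->
  derivable_pt_lim (fun s => ssq (fun j => x s j - y s j) L) t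
    (foldr (fun j acc => 2 * (x t j - y t j) * (x' t j - y' t j) + acc) 0 L).
Proof.
move=> Hx Hy; elim: L => [|j L IH] /=.
- exact: (derivable_pt_lim_const 0 t).
- have Hd : derivable_pt_lim (fun s => x s j - y s j) t (x' t j - y' t j).
    exact: (derivable_pt_lim_minus (fun s => x s j) (fun s => y s j)).
  have Hm := derivable_pt_lim_mult _ _ _ _ _ Hd Hd.
  have Hp := derivable_pt_lim_plus _ _ _ _ _ Hm IH.
  have E : (x' t j - y' t j) * (x t j - y t j) + (x t j - y t j) * (x' t j - y' t j)
     + foldr (fun j acc => 2 * (x t j - y t j) * (x' t j - y' t j) + acc) 0 L
     = 2 * (x t j - y t j) * (x' t j - y' t j) +
       foldr (fun j acc => 2 * (x t j - y t j) * (x' t j - y' t j) + acc) 0 L by ring.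
  rewrite -E.
  exact Hp.
Qed.

Lemma in_enum (k : 'I_n) : k \in enum 'I_n.
Proof. by rewrite mem_enum. Qed.

Lemma dpl_val f x l1 l2 : l1 = l2 -> derivable_pt_lim f x l1 -> derivable_pt_lim f x l2.
Proof. by move=> ->. Qed.

Lemma fold_bound (a : 'I_n -> R) B L : (forall j, a j <= B) ->
  foldr (fun j acc => a j + acc) 0 L <= INR (size L) * B.
Proof.
move=> H; elim: L => [|j L IH]; first (simpl; lra).
rewrite [foldr _ _ _]/=.
change (size (j :: L)) with (size L).+1. rewrite S_INR. have := H j. lra.
Qed.

Lemma ssq_0 d L : (forall j, d j = 0) -> ssq d L = 0.
Proof. move=> H; elim: L => [|j L IH] //=. rewrite /ssq /= in IH *. rewrite IH H. ring. Qed.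

Lemma uniq_fwd (f : field n) kappa (x y : R -> vec n) a :
 lipschitz kappa f ->
 (forall t i, derivable_pt_lim (fun s => x s i) t (f (x t) t i)) ->
 (forall t i, derivable_pt_lim (fun s => y s i) t (f (y t) t i)) ->
 (forall j, x a j = y a j) -> forall b, a <= b -> forall i, x b i = y b i.
Proof.
move=> Hl Hx Hy Ha b Hab i.
have k0 : 0 <= kappa.
  have H1 : forall j, Rabs (x a j - x a j) <= 1.
    move=> j; rewrite Rminus_diag Rabs_R0; lra.
  have H2 : Rabs (a - a) <= 1 by rewrite Rminus_diag Rabs_R0; lra.
  have := Hl (x a) (x a) a a 1 H1 H2 i. have := Rabs_pos (f (x a) a i - f (x a) a i). lra.
set L := enum 'I_n.
set S := fun s => ssq (fun j => x s j - y s j) L.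
set K := 2 * kappa * INR (size L).
set S' := fun t => foldr (fun j acc => 2 * (x t j - y t j) * (f (x t) t j - f (y t) t j) + acc) 0 L.
have HS : forall t, derivable_pt_lim S t (S' t).
  move=> t; apply: (ssq_deriv x y (fun t j => f (x t) t j) (fun t j => f (y t) t j)).
  - by move=> j; apply: Hx.
  - by move=> j; apply: Hy.
have Hbd : forall t, S' t <= K * S t.
  move=> t.
  have Hj : forall j, 2 * (x t j - y t j) * (f (x t) t j - f (y t) t j) <= 2 * kappa * S t.
    move=> j. set q := sqrt (S t).
    have S0 : 0 <= S t by apply: ssq_ge0.
    have Sq : q * q = S t by apply: sqrt_sqrt.
    have Hd : forall k, Rabs (x t k - y t k) <= q.
      move=> k.
      have Hk := ssq_le (fun j => x t j - y t j) L k (in_enum _).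
      rewrite -sqrt_Rsqr_abs /q /Rsqr. apply: sqrt_le_1_alt. exact Hk.
    have Ht : Rabs (t - t) <= q by rewrite Rminus_diag Rabs_R0; apply: sqrt_pos.
    have He := Hl (x t) (y t) t t q Hd Ht j.
    have H1 := Rle_abs ((x t j - y t j) * (f (x t) t j - f (y t) t j)).
    rewrite Rabs_mult in H1.
    have H2 : Rabs (x t j - y t j) * Rabs (f (x t) t j - f (y t) t j) <= q * (kappa * q).
      apply: Rmult_le_compat; [apply: Rabs_pos|apply: Rabs_pos|apply: Hd|exact He].
    rewrite -Sq. nra.
  move: (fold_bound _ _ L Hj) => H. rewrite /S' /K. apply: (Rle_trans _ _ _ H). right; move: (S t) (INR (size L)) => u w; ring.
set h := fun s => S s * exp (- (K * s)).
have Hh : forall t, derivable_pt_lim h t (S' t * exp (- (K * t)) + S t * (exp (- (K * t)) * (- K))).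
  move=> t.
  have E1 : derivable_pt_lim (fun s => - (K * s)) t (- K).
    apply: dpl_val (derivable_pt_lim_opp _ _ _ (derivable_pt_lim_scal id K t 1 (derivable_pt_lim_id t))).
    ring.
  have E2 := derivable_pt_lim_comp _ _ _ _ _ E1 (derivable_pt_lim_exp (- (K * t))).
  exact: (derivable_pt_lim_mult _ _ _ _ _ (HS t) E2).
case: (Rle_lt_or_eq_dec _ _ Hab) => [Hlt|<-]; last exact: Ha.
have [c [Hc _]] := MVT_cor2 h _ a b Hlt (fun c _ => Hh c).
have ha : h a = 0 by rewrite /h /S ssq_0 ?Rmult_0_l // => j; rewrite Ha; ring.
have ec := exp_pos (- (K * c)).
have eb := exp_pos (- (K * b)).
have Sc := ssq_ge0 (fun j => x c j - y c j) L.
have Hbc := Hbd c.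
have Sb := ssq_ge0 (fun j => x b j - y b j) L.
have hb : h b <= 0.
  have : S' c * exp (- (K * c)) + S c * (exp (- (K * c)) * - K) <= 0.
    have -> : S' c * exp (- (K * c)) + S c * (exp (- (K * c)) * - K) = exp (- (K * c)) * (S' c - K * S c) by ring.
    rewrite /S in Hbc *. nra.
  move=> H. rewrite ha in Hc. nra.
have Sb0 : S b = 0.
  rewrite /h in hb. rewrite /S in hb *. nra.
have := ssq_le (fun j => x b j - y b j) L i (in_enum _).
rewrite -/(S b) Sb0 => H. nra.
Qed.
End L.

Lemma f_ext n (f : field n) kappa r r' tau tau' i :
  lipschitz kappa f -> (forall j, r j = r' j) -> tau = tau' -> f r tau i = f r' tau' i.
Proof.
move=> Hl Hr Ht.
have H1 : forall j, Rabs (r j - r' j) <= 0 by move=> j; rewrite Hr Rminus_diag Rabs_R0; lra.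
have H2 : Rabs (tau - tau') <= 0 by rewrite Ht Rminus_diag Rabs_R0; lra.
have := Hl r r' tau tau' 0 H1 H2 i. rewrite Rmult_0_r => H.
have := Rabs_pos (f r tau i - f r' tau' i).
move=> H3. have H4 : Rabs (f r tau i - f r' tau' i) = 0 by lra.
case: (Req_dec (f r tau i) (f r' tau' i)) => // Hne. have := Rabs_no_R0 _ (Rminus_eq_contra _ _ Hne). lra.
Qed.

Lemma translate n (f : field n) kappa v c (z : 'I_n -> Z) tau i :
  lipschitz kappa f -> periodic_field f -> is_flow f v -> 0 <= tau ->
  v (fun j => c j + IZR (z j)) tau i = v c tau i + IZR (z i).
Proof.
move=> Hl Hp Hf Ht.
apply: (@uniq_fwd n f kappa (fun s => v (fun j => c j + IZR (z j)) s)
   (fun s j => v c s j + IZR (z j)) 0 Hl) => //.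
- move=> t j. exact: (proj2 (Hf _)).
- move=> t j.
  have D := derivable_pt_lim_plus _ _ _ _ _ (proj2 (Hf c) t j) (derivable_pt_lim_const (IZR (z j)) t).
  apply: dpl_val D. rewrite Rplus_0_r.
  have P := Hp (v c t) t z 0%Z. rewrite Rplus_0_r in P. by rewrite P.
- move=> j. rewrite (proj1 (Hf _)) (proj1 (Hf c)). by [].
Qed.

Lemma timeshift n (f : field n) kappa v c (k : Z) T i :
  lipschitz kappa f -> periodic_field f -> is_flow f v -> IZR k <= T ->
  v c T i = v (v c (IZR k)) (T - IZR k) i.
Proof.
move=> Hl Hp Hf Ht.
apply: (@uniq_fwd n f kappa (fun s => v c s)
   (fun s => v (v c (IZR k)) (s - IZR k)) (IZR k) Hl) => //.
- move=> t j. exact: (proj2 (Hf _)).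
- move=> t j.
  have E1 : derivable_pt_lim (fun s => s - IZR k) t 1.
    apply: dpl_val (derivable_pt_lim_minus _ _ _ _ _ (derivable_pt_lim_id t) (derivable_pt_lim_const (IZR k) t)). ring.
  have D := derivable_pt_lim_comp _ _ _ _ _ E1 (proj2 (Hf (v c (IZR k))) (t - IZR k) j).
  apply: dpl_val D. rewrite Rmult_1_r.
  have P := Hp (v (v c (IZR k)) (t - IZR k)) (t - IZR k) (fun _ => 0%Z) k.
  rewrite -P. apply: (f_ext _ _ _ _ _ _ _ _ Hl) => [j'|]; rewrite /=; ring.
- move=> j. rewrite Rminus_diag (proj1 (Hf _)). by [].
Qed.

Lemma mvt_bound (g g' : R -> R) M a b :
  (forall s, derivable_pt_lim g s (g' s)) -> (forall s, Rabs (g' s) <= M) -> a <= b ->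
  Rabs (g b - g a) <= M * (b - a).
Proof.
move=> Hd HM Hab.
case: (Rle_lt_or_eq_dec _ _ Hab) => [Hlt|<-].
- have [c [Hc _]] := MVT_cor2 g g' a b Hlt (fun c _ => Hd c).
  rewrite Hc Rabs_mult (Rabs_right (b - a)); last lra.
  apply: Rmult_le_compat_r; [lra|exact: HM].
- rewrite !Rminus_diag Rabs_R0 Rmult_0_r. lra.
Qed.

Lemma absle x y : Rabs x <= y -> x <= y /\ - y <= x.
Proof. move=> H; split_Rabs; lra. Qed.

Theorem lemma3p2 (n : nat) (f : field n) (kappa : R)
  (v : vec n -> R -> vec n) (C0 : R) (M : 'I_n -> R) :
  (2 <= n)%N ->
  continuous_field f ->
  lipschitz kappa f ->
  periodic_field f ->
  is_flow f v ->
  (forall i, is_supnorm_comp f i (M i)) ->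
  C0 > 0 ->
  (forall c1 c2 : vec n, (forall j, 0 <= c1 j - c2 j <= 1) ->
     forall (i : 'I_n) (tau : R), tau > 0 -> v c2 tau i - v c1 tau i <= C0) ->
  forall (sigma l t : R) (c : vec n) (i : 'I_n),
    sigma > 0 -> l > 0 -> t > 0 ->
    v (vscale (sigma + l) c) ((sigma + l) * t) i <=
      v (vscale sigma c) (sigma * t) i + v (vscale l c) (l * t) i
      + 2 * (M i + C0 + 1).
Proof.
move=> _ _ Hl Hp Hf HM HC0 H0 sigma l t c i Hs Hl0 Ht.
have Mb : forall r tau, Rabs (f r tau i) <= M i.
  move=> r tau. apply: (proj1 (HM i)). by exists r, tau.
have M0 : 0 <= M i.
  have := Mb (fun _ => 0) 0. have := Rabs_pos (f (fun _ => 0) 0 i). lra.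
have Hder : forall c0, forall s, derivable_pt_lim (fun s => v c0 s i) s (f (v c0 s) s i).
  move=> c0 s. exact: (proj2 (Hf c0)).
have Hbd : forall c0 a b, a <= b -> Rabs (v c0 b i - v c0 a i) <= M i * (b - a).
  move=> c0 a b Hab. exact: (mvt_bound (fun s => v c0 s i) (fun s => f (v c0 s) s i) (M i) a b (Hder c0) (fun s => Mb _ _) Hab).
set s := l * t.
have s0 : 0 < s by rewrite /s; nra.
set k := (up s - 1)%Z.
have [A1 A2] := archimed s.
have Ek : IZR k = IZR (up s) - 1 by rewrite /k minus_IZR.
have k1 : IZR k <= s by lra.
have k2 : s < IZR k + 1 by lra.
have k0 : 0 <= IZR k.
  have : (-1 < k)%Z by apply: lt_IZR; lra.
  move=> H. apply: IZR_le. lia.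
set delta := s - IZR k.
set c2 := vscale (sigma + l) c.
set Q := v c2 (IZR k).
have SA : v c2 ((sigma + l) * t) i = v Q (sigma * t + delta) i.
  rewrite (timeshift _ _ _ _ _ k _ i Hl Hp Hf); last by rewrite /s in k1; nra.
  rewrite -/Q. f_equal. rewrite /delta /s. ring.
have SB : v Q (sigma * t + delta) i <= v Q (sigma * t) i + M i * delta.
  have := Hbd Q (sigma * t) (sigma * t + delta) ltac:(rewrite /delta; lra).
  move/absle => [H _]. have E : sigma * t + delta - sigma * t = delta by ring.
  rewrite E in H. lra.
set z' := fun j => up (Q j - vscale sigma c j).
have SC : v Q (sigma * t) i <= v (vscale sigma c) (sigma * t) i + (Q i - sigma * c i + 1) + C0.
  have Hc : forall j, 0 <= (fun j => vscale sigma c j + IZR (z' j)) j - Q j <= 1.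
    move=> j /=. rewrite /z'. have [B1 B2] := archimed (Q j - vscale sigma c j). lra.
  have := H0 _ _ Hc i (sigma * t) ltac:(nra).
  rewrite (translate _ _ _ _ _ _ _ _ Hl Hp Hf); last nra.
  have [B1 B2] := archimed (Q i - vscale sigma c i).
  rewrite /z' /vscale in B1 B2 *. lra.
have SD : Q i <= v (vscale l c) (IZR k) i + sigma * c i + 1 + C0.
  case: (Rle_lt_or_eq_dec _ _ k0) => [kp|ke].
  - set z := fun j => up (vscale sigma c j).
    have Hc : forall j, 0 <= (fun j => vscale l c j + IZR (z j)) j - c2 j <= 1.
      move=> j /=. rewrite /z /c2. have [B1 B2] := archimed (vscale sigma c j).
      rewrite /vscale in B1 B2 *. lra.
    have := H0 _ _ Hc i (IZR k) kp.
    rewrite (translate _ _ _ _ _ _ _ _ Hl Hp Hf); last lra.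
    have [B1 B2] := archimed (vscale sigma c i).
    rewrite /z /vscale in B1 B2 *. rewrite /Q. lra.
  - rewrite /Q -ke (proj1 (Hf _)) (proj1 (Hf _)) /c2 /vscale. lra.
have SE : v (vscale l c) (IZR k) i <= v (vscale l c) (l * t) i + M i * delta.
  have := Hbd (vscale l c) (IZR k) s k1.
  move/absle => [_ H]. rewrite /delta /s in H *. lra.
rewrite -/c2 SA.
have Md : M i * delta <= M i * 1 by apply: Rmult_le_compat_l; rewrite /delta; lra.
rewrite /s. clearbody z' Q c2 delta k s. lra.
Qed.
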